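(* In the transactional panorama model with the lenses and metrics described in the context, $I(\mathrm{LCMB}) \ge I(\mathrm{LCNB}) = I(\mathrm{ICNB})$.
   Context: A view graph is a DAG on a set $N$ of nodes (source data and views). Write transactions are processed one at a time; write transaction $w^{t_i}$ creates version $G^{t_i}$ with state set $V^{t_i}$ containing, for each node $n_k$, either its computed new result, a placeholder $UC_k^{t_i}$ if $w^{t_i}$ updates $n_k$ but has not yet computed it, or its result from the previous version if $n_k$ is not updated. A version is committed once all its new results are computed; at any time there is the committed graph (most recently committed version, no UCs) and the latest graph (version of the most recent write transaction). Read transactions $r^{s_1},\dots,r^{s_m}$ each read the views in the current viewport and return immediately a set $H^{s_i}$ of states (results or UCs); $Time(r^{s_i})$ is its return time. A returned state's timestamp is that of its version. Lenses: LCNB returns the viewport states from the more recent of the committed and latest graphs that has zero UCs for the viewport. LCMB: if reading either the committed or the latest graph preserves monotonicity (no view gets a state with smaller timestamp than previously read), behave like LCNB; otherwise read the latest graph. ICNB returns, for each view independently, its most recently computed result. Invisibility for $R=\{r^{s_1},\dots,r^{s_m}\}$: $I(R)=\sum_{i=1}^{m-1}|H^{s_i}_{UC}|\,(Time(r^{s_{i+1}})-Time(r^{s_i}))$, where $H^{s_i}_{UC}$ is the set of UCs in $H^{s_i}$. $I(A)$ denotes invisibility under lens $A$; lenses are compared on the same write transactions, the same order of computing new view results, and the same sequence of read transactions. *)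

(* Defs.v *)
From HB Require Import structures.
From mathcomp Require Import all_boot all_order all_algebra.
Set Implicit Arguments. Unset Strict Implicit. Unset Printing Implicit Defensive.
Import Order.TTheory GRing.Theory Num.Theory.

(* A state returned for a node: either the computed result of node k created
   by version j (version 0 = initial, fully computed graph), or the
   placeholder UC_k^{t_j} of write transaction j. *)
Inductive state (N : Type) :=
  | Res of nat & N
  | UC of nat & N.

Definition ts N (x : state N) : nat := match x with Res j _ => j | UC j _ => j end.
Definition is_uc N (x : state N) : bool := if x is UC _ _ then true else false.

Definition acyclic (N : finType) (e : rel N) : Prop :=
  forall k : N, ~~ [exists k', e k k' && connect e k' k].

(* A scenario: a view graph (DAG on N), write transactions w^{t_1..t_W}
   (version i has timestamp rank i; version 0 is the initial committed graph),
   the times at which each new view result is computed, and a sequence of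
   read transactions with their viewports and return times. *)
Record scenario (R : realDomainType) (N : finType) := Scenario {
  edge : rel N;
  edge_acyclic : acyclic edge;
  W : nat;
  upd : nat -> {set N};             (* nodes updated by w^{t_i}, 1 <= i <= W *)
  arr : nat -> R;                   (* time at which w^{t_i} is issued *)
  comp : nat -> N -> R;             (* time at which w^{t_i} computes node k *)
  arr_mono : forall i j, 1 <= i -> i <= j -> j <= W -> (arr i <= arr j)%R;
  comp_after : forall i k, 1 <= i -> i <= W -> k \in upd i -> (arr i <= comp i k)%R;
  nreads : nat;
  rtime : nat -> R;                 (* Time(r^{s_i}), reads indexed 0..m-1 *)
  viewport : nat -> {set N};
  rtime_mono : forall i, i.+1 < nreads -> (rtime i <= rtime i.+1)%R
}.

Section Model.
Variables (R : realDomainType) (N : finType) (S : scenario R N).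
Local Open Scope ring_scope.

(* version whose result node k carries in version i *)
Fixpoint origin (i : nat) (k : N) : nat :=
  match i with
  | 0 => 0
  | i'.+1 => if (i <= W S)%N && (k \in upd S i) then i else origin i' k
  end.

Definition state_at (tau : R) (i : nat) (k : N) : state N :=
  let j := origin i k in
  if (j == 0)%N || (comp S j k <= tau) then Res j k else UC j k.

Definition latest (tau : R) : nat :=
  \max_(i < (W S).+1 | (i == 0 :> nat) || (arr S i <= tau)) i.

Definition no_uc (tau : R) (i : nat) (V : {set N}) : bool :=
  [forall k in V, ~~ is_uc (state_at tau i k)].

Definition committed (tau : R) : nat :=
  \max_(i < (W S).+1 | ((i : nat) <= latest tau)%N && no_uc tau i setT) i.

Definition read_graph (tau : R) (i : nat) : N -> state N := state_at tau i.

Definition lcnb (tau : R) (V : {set N}) : N -> state N :=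
  if no_uc tau (latest tau) V then read_graph tau (latest tau)
  else read_graph tau (committed tau).

Definition computed_by (tau : R) (k : N) (j : nat) : bool :=
  [&& (1 <= j)%N, (j <= W S)%N, k \in upd S j & comp S j k <= tau].

Definition icnb (tau : R) (V : {set N}) : N -> state N := fun k =>
  Res (\max_(j < (W S).+1 | computed_by tau k j &&
          [forall j' : 'I_(W S).+1, computed_by tau k j' ==> (comp S j' k <= comp S j k)]) j) k.

Definition preserves (prev : seq ({set N} * (N -> state N))) (V : {set N})
    (H : N -> state N) : bool :=
  all (fun p => [forall k in V :&: p.1, (ts (p.2 k) <= ts (H k))%N]) prev.

Definition lcmb_step (prev : seq ({set N} * (N -> state N))) (tau : R) (V : {set N})
    : N -> state N :=
  if preserves prev V (read_graph tau (committed tau))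
     && preserves prev V (read_graph tau (latest tau))
  then lcnb tau V else read_graph tau (latest tau).

Fixpoint lcmb_hist (n : nat) : seq ({set N} * (N -> state N)) :=
  match n with
  | 0 => [::]
  | n'.+1 => let prev := lcmb_hist n' in
             rcons prev (viewport S n', lcmb_step prev (rtime S n') (viewport S n'))
  end.

Inductive lens := LCNB | LCMB | ICNB.

(* H^{s_i} under lens A (meaningful on viewport S i) *)
Definition read_result (A : lens) (i : nat) : N -> state N :=
  match A with
  | LCNB => lcnb (rtime S i) (viewport S i)
  | ICNB => icnb (rtime S i) (viewport S i)
  | LCMB => lcmb_step (lcmb_hist i) (rtime S i) (viewport S i)
  end.

Definition num_uc (A : lens) (i : nat) : nat :=
  #|[set k in viewport S i | is_uc (read_result A i k)]|.

Definition invisibility (A : lens) : R :=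
  \sum_(i < (nreads S).-1) (num_uc A i)%:R * (rtime S i.+1 - rtime S i).

End Model.

(* Main.v *)
Require Import Defs.
From mathcomp Require Import all_boot all_order all_algebra.
Import Order.TTheory GRing.Theory Num.Theory.
From mathcomp Require Import zify.

Section H.
Variables (R : realDomainType) (N : finType) (S : scenario R N).
Local Open Scope ring_scope.

Lemma committed_ok tau k : ~~ is_uc (state_at S tau (committed S tau) k).
Proof.
rewrite /committed.
apply: (big_ind (fun n => forall k, ~~ is_uc (state_at S tau n k))).
- by move=> k'; rewrite /state_at /=.
- by move=> x y Hx Hy k'; rewrite /maxn; case: ifP.
- move=> i /andP [_ /forallP Hi] k'.
  by have := Hi k'; rewrite in_setT.
Qed.

Lemma lcnb_ok tau (V : {set N}) (k : N) : k \in V -> ~~ is_uc (lcnb S tau V k).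
Proof.
move=> kV; rewrite /lcnb; case: ifP => H.
  by move/forall_inP: H => /(_ k kV).
exact: committed_ok.
Qed.

Lemma num_uc_lcnb i : num_uc S LCNB i = 0%N.
Proof.
apply/eqP; rewrite cards_eq0; apply/eqP/setP => k.
rewrite !inE /=; case kV: (k \in viewport S i) => //=.
by apply/negbTE/lcnb_ok.
Qed.

Lemma num_uc_icnb i : num_uc S ICNB i = 0%N.
Proof.
apply/eqP; rewrite cards_eq0; apply/eqP/setP => k.
by rewrite !inE /= andbF.
Qed.

End H.

Theorem theorem2p10 (R : realDomainType) (N : finType) (S : scenario R N) :
  (invisibility S LCNB <= invisibility S LCMB)%R /\
  invisibility S LCNB = invisibility S ICNB.
Proof.
have -> : invisibility S LCNB = 0%R.
  by rewrite /invisibility big1 // => i _; rewrite num_uc_lcnb mul0r.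
have -> : invisibility S ICNB = 0%R.
  by rewrite /invisibility big1 // => i _; rewrite num_uc_icnb mul0r.
split => //.
rewrite /invisibility; apply: sumr_ge0 => i _.
apply: mulr_ge0; first exact: ler0n.
rewrite subr_ge0; apply: rtime_mono.
have := ltn_ord i; lia.
Qed.
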